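(* For integers $N\ge 1$ and $n\ge 1$, $$B_{N,n}=n!\sum_{k=1}^{n}\ \sum_{\substack{i_1+\cdots+i_k=n\\ i_1,\dots,i_k\ge 1}}\frac{(-N!)^k}{(N+i_1)!\cdots(N+i_k)!},$$ where the inner sum runs over all $k$-tuples of positive integers $(i_1,\dots,i_k)$ with sum $n$.
   Context: For a positive integer $N$, the hypergeometric Bernoulli numbers $B_{N,n}$ ($n\ge 0$) are defined by $$\frac{x^N/N!}{e^x-\sum_{n=0}^{N-1}x^n/n!}=\sum_{n=0}^\infty B_{N,n}\frac{x^n}{n!}.$$ *)

(* Defs.v *)
From HB Require Import structures.
From mathcomp Require Import all_boot all_order all_algebra.
Set Implicit Arguments. Unset Strict Implicit. Unset Printing Implicit Defensive.
Import Order.TTheory GRing.Theory Num.Theory.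
Local Open Scope ring_scope.

(* Coefficient of x^k in the formal power series e^x - sum_{n<N} x^n/n! . *)
Definition trunc_exp_coef {R : numFieldType} (N k : nat) : R :=
  if (N <= k)%N then (k`!%:R)^-1 else 0.

(* B : nat -> R is the sequence of hypergeometric Bernoulli numbers B_{N,n},
   i.e. (as formal power series)
     (sum_n B n x^n/n!) * (e^x - sum_{n<N} x^n/n!) = x^N / N!,
   written coefficientwise via the Cauchy product. *)
Definition is_hyp_bernoulli {R : numFieldType} (N : nat) (B : nat -> R) : Prop :=
  forall m : nat,
    \sum_(j < m.+1) (B j / (j`!)%:R) * trunc_exp_coef N (m - j)
    = if m == N then ((N`!)%:R)^-1 else 0.

(* Main.v *)
Require Import Defs.
From HB Require Import structures.
From mathcomp Require Import all_boot all_order all_algebra.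
From mathcomp Require Import ring zify.
Import Order.TTheory GRing.Theory Num.Theory.
Local Open Scope ring_scope.

Lemma powX_low (R : numFieldType) (p : {poly R}) k m :
  p`_0 = 0 -> (m < k)%N -> (p ^+ k)`_m = 0.
Proof.
move=> p0; elim: k m => [|k IH] m //= Hm.
rewrite exprS coefM big1 // => [[j /= Hj]] _.
case: j Hj => [|j] Hj; first by rewrite p0 mul0r.
by rewrite IH ?mulr0 //; rewrite ltnS in Hm Hj; lia.
Qed.

Lemma unique_inv (R : numFieldType) (e D : {poly R}) n :
  e`_0 = 1 -> (forall m, (m <= n)%N -> (D * e)`_m = 0) ->
  forall m, (m <= n)%N -> D`_m = 0.
Proof.
move=> e0 H m; elim/ltn_ind: m => m IH Hm.
have := H m Hm; rewrite coefM big_ord_recr /= subnn e0 mulr1 big1 ?add0r //.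
move=> [j /= Hj] _; rewrite IH ?mul0r //; lia.
Qed.

Lemma geom_tel (R : numFieldType) (P : {poly R}) m :
  (\sum_(k < m) P ^+ k) * (1 - P) = 1 - P ^+ m.
Proof.
elim: m => [|m IH]; first by rewrite big_ord0 mul0r expr0 subrr.
by rewrite big_ord_recr /= mulrDl IH exprS; ring.
Qed.
Definition dd (R : numFieldType) (N i : nat) : R :=
  if i == 0%N then 0 else - (N`!)%:R / ((N + i)`!)%:R.
Definition PP (R : numFieldType) (N n : nat) : {poly R} := \poly_(i < n.+1) dd R N i.

Lemma prod_monos (R : numFieldType) k (a : 'I_k -> R) (f : 'I_k -> nat) :
  \prod_(i < k) (a i *: ('X^(f i) : {poly R})) =
  (\prod_(i < k) a i) *: 'X^(\sum_(i < k) f i).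
Proof.
under eq_bigr do rewrite -mul_polyC.
by rewrite big_split /= -rmorph_prod prodrXr mul_polyC.
Qed.

Lemma inner (R : numFieldType) N n k :
  \sum_(t : {ffun 'I_k -> 'I_n.+1} |
              ((\sum_(i < k) (t i : nat))%N == n) && [forall i, (0 < t i)%N])
        ((- (N`!)%:R) ^+ k / \prod_(i < k) ((N + t i)`!)%:R)
  = ((PP R N n) ^+ k)`_n.
Proof.
set P := PP R N n.
have -> : P ^+ k = \prod_(i < k) P by rewrite prodr_const card_ord.
rewrite /P /PP poly_def bigA_distr_bigA coef_sum.
rewrite big_mkcond /=; apply: eq_bigr => t _.
rewrite prod_monos coefZ coefXn.
case: ifP => /andP.
  case=> /eqP -> /forallP Hp; rewrite eqxx mulr1.
  have -> : (- (N`!)%:R) ^+ k = \prod_(i < k) (- (N`!)%:R : R) by rewrite prodr_const card_ord.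
  rewrite -prodfV -big_split /=; apply: eq_bigr => i _.
  by rewrite /dd; case: eqP => // Ht; have := Hp i; rewrite Ht.
move=> Hn; case: eqP => [Hs|]; last by rewrite mulr0.
have [i Hi] : exists i, t i = 0 :> nat.
  case: (boolP [forall i, (0 < t i)%N]) => [Hall|].
    by exfalso; apply: Hn; split; [rewrite -Hs | ].
  rewrite negb_forall => /existsP [i]; rewrite lt0n negbK => /eqP Hi; by exists i.
by rewrite (bigD1 i) //= /dd Hi eqxx mul0r mul0r.
Qed.
Lemma fact_neq0 (R : numFieldType) k : ((k`!)%:R : R) != 0.
Proof. by rewrite pnatr_eq0 -lt0n fact_gt0. Qed.

Theorem proposition2 (R : numFieldType) (N : nat) (B : nat -> R) :
  (1 <= N)%N -> is_hyp_bernoulli N B ->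
  forall n : nat, (1 <= n)%N ->
  B n = (n`!)%:R *
    \sum_(1 <= k < n.+1)
      \sum_(t : {ffun 'I_k -> 'I_n.+1} |
              ((\sum_(i < k) (t i : nat))%N == n) && [forall i, (0 < t i)%N])
        ((- (N`!)%:R) ^+ k / \prod_(i < k) ((N + t i)`!)%:R).
Proof.
move=> N1 H n n1.
set b := fun j => B j / (j`!)%:R.
set P := PP R N n.
set Bp : {poly R} := \poly_(j < n.+1) b j.
set e : {poly R} := 1 - P.
set Q := \sum_(k < n.+1) P ^+ k.
have P0 : P`_0 = 0 by rewrite /P /PP coef_poly /= /dd eqxx.
have e0 : e`_0 = 1 by rewrite /e coefB coef1 P0 subr0.
have eN i : (i <= n)%N -> e`_i = (N`!)%:R / ((N + i)`!)%:R.
  move=> Hi; rewrite /e coefB coef1 /P /PP coef_poly ltnS Hi /dd.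
  case: eqP => [->|_]; first by rewrite addn0 divff ?fact_neq0 // subr0.
  by rewrite sub0r mulNr opprK.
have Be m : (m <= n)%N -> (Bp * e)`_m = (m == 0%N)%:R.
  move=> Hm.
  have E : \sum_(j < m.+1) b j * trunc_exp_coef N (N + m - j)
           = if (N + m == N)%N then ((N`!)%:R)^-1 else 0.
    rewrite -H; symmetry.
    rewrite -(big_mkord xpredT (fun j => B j / (j`!)%:R * trunc_exp_coef N (N + m - j))).
    rewrite (@big_cat_nat _ _ _ m.+1) //=; last by lia.
    rewrite [X in _ + X]big_nat_cond [X in _ + X]big1 ?addr0; last first.
      move=> j /andP[/andP[Hj1 Hj2] _]; rewrite /trunc_exp_coef ifF ?mulr0 //.
      apply/negbTE; lia.
    by rewrite big_mkord.
  have -> : (Bp * e)`_m = (N`!)%:R * \sum_(j < m.+1) b j * trunc_exp_coef N (N + m - j).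
    rewrite coefM mulr_sumr; apply: eq_bigr => [[j /= Hj]] _.
    have Hjn : (j < n.+1)%N by lia.
    have Hmj : (m - j <= n)%N by lia.
    have HNl : (N <= N + m - j)%N by lia.
    have HNe : (N + m - j = N + (m - j))%N by lia.
    rewrite /Bp coef_poly Hjn (eN _ Hmj) /trunc_exp_coef HNl HNe.
    by rewrite mulrCA.
  rewrite E; case: eqP => [Hm0|Hm0].
    by rewrite (_ : m = 0%N) ?divff ?fact_neq0 //; lia.
  by rewrite mulr0 (_ : (m == 0%N) = false) //; apply/eqP; lia.
have D0 := @unique_inv R e (Bp - Q) n e0.
have {D0}: Bp`_n = Q`_n.
  apply/eqP; rewrite -subr_eq0 -coefB; apply/eqP; apply: D0 (leqnn n) => m Hm.
  have Hmn : (m < n.+1)%N by lia.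
  rewrite mulrBl coefB Be // /Q geom_tel coefB coef1 (@powX_low R P _ _ P0 Hmn).
  by rewrite subr0 subrr.
rewrite /Bp coef_poly ltnSn /b /Q coef_sum => Hb.
rewrite -[B n](divfK (fact_neq0 R n)) mulrC Hb.
congr (_ * _).
rewrite -(big_mkord xpredT (fun k => (P ^+ k)`_n)) big_ltn // expr0 coef1.
rewrite (_ : (n == 0%N) = false); last by apply/eqP; lia.
rewrite add0r; apply: eq_big_nat => k _.
by rewrite inner.
Qed.
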